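(* Let $p$ be a prime number and let $x,y,z\in\mathbb{N}$ with $x\le y\le z$ satisfy $\frac{4}{p}=\frac{1}{x}+\frac{1}{y}+\frac{1}{z}$. If $\gcd(y,p)=p$, then $\gcd(z,p)=p$.
   Context: $\mathbb{N}$ denotes the positive integers. *)

(* Defs.v *)
From mathcomp Require Import all_boot all_order all_algebra.

(* Main.v *)
Require Import Defs.
From mathcomp Require Import all_boot all_order all_algebra.
From mathcomp Require Import ring lra zify.
Import GRing.Theory Num.Theory.

Lemma final_step : forall p x b z k, 0 < p -> 0 < x -> 0 < b -> 0 < z -> 0 < k -> 1 < p -> p*b <= z ->
  4 * b = k * p + 1 -> x * z * k = b * (z + x) -> p < 4 * x -> False.
Proof.
move=> p x b z k p0 x0 b0 z0 k0 p1 yz hk F px4.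
have F' : z * (x * k - b) = b * x.
  rewrite mulnBr. apply/eqP; rewrite -(eqn_add2r (z*b)) subnK.
    by apply/eqP; move: F; rewrite mulnDr; lia.
  have : z * b <= z*(x*k) by move: F; rewrite mulnDr; lia.
  done.
have G : p * (x * k - b) <= x.
  have : p * b * (x * k - b) <= b * x.
    by rewrite -F' leq_mul2r yz orbT.
  by rewrite (mulnC p) -mulnA leq_pmul2l.
have G2 : p * (x * k) = x * (4 * b) - x by rewrite hk; lia.
have xb : x * (4 * b) <= p * b + 2 * x.
  move: G; rewrite mulnBr G2; lia.
have kb : 4 * b <= 2 * p + 2.
  have h1 : (p+1) * (4 * b - 2) <= 4 * x * (4 * b - 2).
    by rewrite leq_mul2r addn1 px4 orbT.
  have h2 : 4 * x * (4 * b - 2) <= 4 * (p * b).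
    rewrite -mulnA leq_mul2l mulnBr; apply/orP; right; lia.
  have h3 := leq_trans h1 h2.
  move: h3; rewrite mulnBr mulnDl; lia.
have k1 : k = 1.
  have hkp : k * p <= 2 * p + 1 by lia.
  have [k3|k3] := ltnP k 3.
    have [k2|k2] := ltnP k 2; first by lia.
    have ek : k = 2 by lia.
    by move: hk; rewrite ek; lia.
  have : 3 * p <= k * p by rewrite leq_mul2r k3 orbT.
  lia.
subst k.
have xb1 : b < x.
  have : b <= x by lia.
  rewrite leq_eqVlt => /orP[/eqP e|//]; subst x; nia.
have h : (b+1)*(4*b-2) <= x*(4*b-2) by rewrite leq_mul2r addn1 xb1 orbT.
have hp : p = 4 * b - 1 by lia.
subst p.
move: h xb; rewrite !mulnBr !mulnDl !mulnBl; nia.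
Qed.

Theorem lemma4 (p x y z : nat) :
  prime p -> 0 < x -> 0 < y -> 0 < z -> x <= y -> y <= z ->
  (4%:R / p%:R = 1 / x%:R + 1 / y%:R + 1 / z%:R :> rat)%R ->
  gcdn y p = p -> gcdn z p = p.
Proof.
move=> pp x0 y0 z0 xy yz H gy.
have p0 : 0 < p by apply: prime_gt0.
have E0 : 4 * x * y * z = p * (y * z + x * z + x * y).
  apply/eqP; rewrite -(eqr_nat rat); apply/eqP.
  have px : (p%:R : rat) != 0%R by rewrite pnatr_eq0 -lt0n.
  have xx : (x%:R : rat) != 0%R by rewrite pnatr_eq0 -lt0n.
  have yx : (y%:R : rat) != 0%R by rewrite pnatr_eq0 -lt0n.
  have zx : (z%:R : rat) != 0%R by rewrite pnatr_eq0 -lt0n.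
  transitivity ((4%:R / p%:R) * (p%:R * x%:R * y%:R * z%:R) : rat)%R.
    rewrite !natrM; field; exact: px.
  rewrite H !natrM !natrD !natrM; field.
  by rewrite xx yx zx.
have: p %| y by apply/gcdn_idPr.
case/dvdnP=> b yb; rewrite mulnC in yb; subst y.
apply/gcdn_idPr; apply/negPn/negP=> nz.
have b0 : 0 < b by move: y0; rewrite muln_gt0 => /andP[].
have E : 4 * x * b * z = p * b * z + x * z + x * p * b.
  apply/eqP; rewrite -(eqn_pmul2l p0); apply/eqP; move: E0; lia.
have xp : 4 * x <= 3 * p.
  have h1 : x * z <= p * b * z by rewrite leq_mul2r xy orbT.
  have h2 : x * p * b <= p * b * z.
    by rewrite -mulnA (mulnC p b) (mulnC _ z) leq_mul2r (leq_trans xy yz) orbT.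
  have : 4 * x * (b * z) <= 3 * p * (b * z) by nia.
  by rewrite leq_pmul2r // muln_gt0 b0.
have xp' : x < p by lia.
have pnx : ~~ (p %| x) by rewrite gtnNdvd.
have D : x * z * (4 * b - 1) = p * (b * (z + x)).
  have : x * z * (4 * b - 1) + x * z = p * (b * (z + x)) + x * z by nia.
  by move/eqP; rewrite eqn_add2r => /eqP.
have : p %| 4 * b - 1.
  have : p %| x * z * (4 * b - 1) by rewrite D dvdn_mulr.
  by rewrite !Euclid_dvdM // (negbTE pnx) (negbTE nz).
case/dvdnP=> k hk.
have k0 : 0 < k by move: hk; case: k => //=; lia.
have hk' : 4 * b = k * p + 1 by lia.
have F : x * z * k = b * (z + x).
  apply/eqP; rewrite -(eqn_pmul2l p0); apply/eqP.
  move: D; rewrite hk; lia.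
have px4 : p < 4 * x.
  have : p * (b * z) < 4 * x * (b * z) by rewrite !mulnA; lia.
  by rewrite ltn_pmul2r // muln_gt0 b0.
exact: (@final_step p x b z k p0 x0 b0 z0 k0 (prime_gt1 pp) yz hk' F px4).
Qed.
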